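(* For every prime power $q$, the function $n\mapsto\varrho(n,q)$ (for integers $n\ge1$) is increasing, where $$\varrho(n,q):=\frac{f(n,q)}{\binom{n+1}{2}_q}.$$
   Context: $f(n,q)$ is the smallest size of a set of lines of $\mathrm{PG}(n,q)$ (the $n$-dimensional projective space over $\mathbb F_q$) such that every plane contains one of them ($f(1,q)=0$). $\binom{n+1}{2}_q=\frac{(q^{n+1}-1)(q^n-1)}{(q^2-1)(q-1)}$ is the number of lines of $\mathrm{PG}(n,q)$. *)

(* Defs.v *)
From HB Require Import structures.
From mathcomp Require Import all_boot all_order all_algebra all_field.
Set Implicit Arguments. Unset Strict Implicit. Unset Printing Implicit Defensive.
Import GRing.Theory Num.Theory.

(* PG(n,F) = projective geometry of the vector space F^(n+1) = 'rV[F]_(n.+1).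
   A projective subspace of (vector) dimension k is represented canonically by
   the square matrix <<A>>%MS (the canonical representative of its row space). *)

Definition pg_subspaces (F : finFieldType) (n k : nat) : {set 'M[F]_n.+1} :=
  [set A : 'M[F]_n.+1 | (<<A>>%MS == A) && (\rank A == k)].

Definition pg_lines (F : finFieldType) (n : nat) := pg_subspaces F n 2.
Definition pg_planes (F : finFieldType) (n : nat) := pg_subspaces F n 3.

Definition plane_covering (F : finFieldType) (n : nat) (L : {set 'M[F]_n.+1}) :=
  (L \subset pg_lines F n) &&
  [forall P in pg_planes F n, [exists l in L, (l <= P)%MS]].

(* f(n,q): smallest size of such a set of lines.  (The set of all lines is
   always such a set, so the default value #|pg_lines F n| never matters.) *)
Definition f_lines (F : finFieldType) (n : nat) : nat :=
  \big[minn/#|pg_lines F n|]_(L : {set 'M[F]_n.+1} | plane_covering L) #|L|.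

Local Open Scope ring_scope.
Definition gauss2 (q n : nat) : rat :=
  ((q%:R ^+ n.+1 - 1) * (q%:R ^+ n - 1)) / ((q%:R ^+ 2 - 1) * (q%:R - 1)).

Definition rho (F : finFieldType) (n : nat) : rat :=
  (f_lines F n)%:R / gauss2 #|F| n.

(* Main.v *)
Require Import Defs.
From mathcomp Require Import all_boot all_order all_algebra all_field.
From mathcomp Require Import mxabelem ring.
Import Order.TTheory GRing.Theory Num.Theory.

Set Implicit Arguments. Unset Strict Implicit.
Local Open Scope ring_scope.
Section S.
Variable F : finFieldType.

Lemma plane_has_line n (P : 'M[F]_n.+1) : P \in pg_planes F n ->
  exists2 l, l \in pg_lines F n & (l <= P)%MS.
Proof.
rewrite inE => /andP[/eqP cP /eqP rP].
exists (<<(pid_mx 2 : 'M_(n.+1, \rank P)) *m row_base P>>%MS).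
  rewrite inE genmx_id eqxx /= genmxE mxrankMfree ?row_base_free //.
  have := rank_leq_col P; rewrite rP => h3.
  by rewrite rank_pid_mx // (leq_trans _ h3).
by rewrite genmxE (submx_trans (submxMl _ _)) // eq_row_base.
Qed.

Lemma lines_cover n : plane_covering (pg_lines F n).
Proof.
apply/andP; split=> //; apply/forall_inP=> P /plane_has_line[l lL lP].
by apply/exists_inP; exists l.
Qed.

Lemma f_le n (L : {set 'M[F]_n.+1}) : plane_covering L -> (f_lines F n <= #|L|)%N.
Proof.
move=> cL; rewrite /f_lines; exact: (@Order.TotalTheory.bigmin_le_cond _ nat).
Qed.

Lemma f_att n : exists2 L : {set 'M[F]_n.+1}, plane_covering L & f_lines F n = #|L|.
Proof.
rewrite /f_lines; apply: (big_ind (fun x => exists2 L : {set 'M[F]_n.+1}, plane_covering L & x = #|L|)).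
- by exists (pg_lines F n); first exact: lines_cover.
- move=> x y [L1 c1 ->] [L2 c2 ->]; rewrite /minn; case: ifP => _.
  + by exists L1. + by exists L2.
- by move=> L cL; exists L.
Qed.

Lemma restrict m (L : {set 'M[F]_m.+2}) (B : 'M[F]_(m.+1, m.+2)) :
  plane_covering L -> row_free B ->
  (f_lines F m <= #|[set l in L | (l <= B)%MS]|)%N.
Proof.
move=> /andP[sL cL] fB.
pose psi (l : 'M[F]_m.+2) : 'M[F]_m.+1 := <<l *m pinvmx B>>%MS.
apply: (leq_trans _ (leq_imset_card psi _)).
apply: f_le; apply/andP; split.
  apply/subsetP=> x /imsetP[l]; rewrite inE => /andP[lL lB] ->.
  have := subsetP sL l lL; rewrite !inE => /andP[_ rl].
  by rewrite genmx_id eqxx /= genmxE -(mxrankMfree _ fB) mulmxKpV.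
apply/forall_inP=> P; rewrite inE => /andP[cP rP].
have P'p : <<P *m B>>%MS \in pg_planes F m.+1.
  by rewrite inE genmx_id eqxx /= genmxE mxrankMfree.
have /exists_inP[l lL lP] := forall_inP cL _ P'p.
have lB : (l <= B)%MS.
  by apply: (submx_trans lP); rewrite genmxE submxMl.
apply/exists_inP; exists (psi l).
  by apply: imset_f; rewrite inE lL lB.
by rewrite /psi genmxE -(submxMfree _ _ fB) mulmxKpV // (submx_trans lP) ?genmxE.
Qed.

Lemma card_sep (T : finType) (A : {set T}) (p : pred T) :
  #|[set x in A | p x]| = (\sum_(x in A) (p x : nat))%N.
Proof.
rewrite -sum1_card big_mkcond [RHS]big_mkcond /=.
by apply: eq_bigr => x _; rewrite !inE; case: (x \in A); case: (p x).
Qed.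

Lemma hyper_basis m (v : 'rV[F]_m.+2) : v != 0 ->
  exists B : 'M[F]_(m.+1, m.+2), row_free B /\ (B :=: kermx v^T)%MS.
Proof.
move=> nz.
have e : \rank (kermx v^T) = m.+1 by rewrite mxrank_ker mxrank_tr rank_rV nz subn1.
move: (row_base (kermx v^T)) (row_base_free (kermx v^T)) (eq_row_base (kermx v^T)).
rewrite e => B fB eB; by exists B.
Qed.

Lemma count_lines m (L : {set 'M[F]_m.+2}) : plane_covering L ->
  (f_lines F m * (#|F| ^ m.+2 - 1) <= #|L| * (#|F| ^ m - 1))%N.
Proof.
move=> cL.
have sL : L \subset pg_lines F m.+1 by case/andP: cL.
pose S := [set v : 'rV[F]_m.+2 | v != 0].
have cS : #|S| = (#|F| ^ m.+2 - 1)%N.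
  have -> : S = [set~ 0] by apply/setP=> v; rewrite !inE.
  by rewrite cardsC1 card_mx mul1n subn1.
rewrite -cS.
have step1 : (f_lines F m * #|S| <= \sum_(v in S) #|[set l in L | (l <= kermx v^T)%MS]|)%N.
  rewrite mulnC -sum_nat_const; apply: leq_sum => v; rewrite inE => nz.
  have [B [fB eB]] := hyper_basis nz.
  have := restrict cL fB.
  by congr (_ <= _)%N; apply: eq_card => l; rewrite !inE eB.
apply: (leq_trans step1).
under eq_bigr do rewrite card_sep.
rewrite exchange_big /= -sum_nat_const; apply: leq_sum => l lL.
rewrite leq_eqVlt; apply/orP; left; apply/eqP.
have rl : \rank l = 2%N.
  by have := subsetP sL l lL; rewrite !inE => /andP[_ /eqP].
rewrite -card_sep.
have -> : [set v in S | (l <= kermx v^T)%MS] = rowg (kermx l^T) :\ 0.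
  apply/setP=> v; rewrite !inE; congr (_ && _).
  apply/sub_kermxP/sub_kermxP => h.
    by apply: trmx_inj; rewrite trmx_mul trmxK h trmx0.
  by apply: trmx_inj; rewrite trmx_mul trmxK h trmx0.
have := cardsD1 0 (rowg (kermx l^T)).
rewrite card_rowg mxrank_ker mxrank_tr rl mem_rowg sub0mx add1n subn2 /= => ->.
by rewrite subn1.
Qed.

Lemma card_F_gt1 : (1 < #|F|)%N.
Proof.
apply/card_gt1P; exists 0, 1; split=> //.
by rewrite eq_sym oner_neq0.
Qed.

Lemma rho_step n : (1 <= n)%N -> rho F n <= rho F n.+1.
Proof.
move=> n1.
have [L cL fL] := f_att n.+1.
have hN := count_lines cL; rewrite -fL in hN.
rewrite /rho /gauss2.
set a := f_lines F n; set b := f_lines F n.+1.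
have q1 := card_F_gt1.
set q := #|F| in hN q1 *.
have hR : (a%:R * ((q%:R : rat) ^+ n.+2 - 1) <= b%:R * (q%:R ^+ n - 1)).
  have : (a * (q ^ n.+2 - 1))%:R <= (b * (q ^ n - 1))%:R :> rat by rewrite ler_nat.
  by rewrite !natrM !natrB ?expn_gt0 ?(ltnW q1) // !natrX.
have qr1 : 1 < (q%:R : rat) by rewrite ltr1n.
have pX : forall k, (0 < k)%N -> 0 < (q%:R : rat) ^+ k - 1.
  by move=> k k0; rewrite subr_gt0 exprn_egt1 // -lt0n.
have X0 := pX _ (ltn0Sn n).
have Y0 := pX _ n1.
have Z0 := pX _ (ltn0Sn n.+1).
have Q0 := pX _ (ltn0Sn 0).
have Q2 := pX _ (ltn0Sn 1).
rewrite -subr_ge0.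
set X := (q%:R : rat) ^+ n.+1 - 1 in X0 *.
set Y := (q%:R : rat) ^+ n - 1 in Y0 hR *.
set Z := (q%:R : rat) ^+ n.+2 - 1 in Z0 hR *.
set Q := (q%:R : rat) ^+ 1 - 1 in Q0.
set Q' := (q%:R : rat) ^+ 2 - 1 in Q2 *.
have -> : (q%:R : rat) - 1 = Q by rewrite /Q expr1.
have -> : b%:R / (Z * X / (Q' * Q)) - a%:R / (X * Y / (Q' * Q)) =
   (Q' * Q) * (b%:R * Y - a%:R * Z) / (X * Y * Z).
  field; rewrite ?gt_eqF //.
apply: divr_ge0; last by rewrite !mulr_ge0 // ltW.
by rewrite mulr_ge0 ?subr_ge0 // mulr_ge0 // ltW.
Qed.
End S.

Theorem lemma4p6 (F : finFieldType) (n m : nat) :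
  (1 <= n)%N -> (n <= m)%N -> (rho F n <= rho F m)%R.
Proof.
move=> n1; elim: m => [|m IH]; first by rewrite leqn0 => /eqP h; rewrite h in n1.
rewrite leq_eqVlt => /orP[/eqP -> // | ].
rewrite ltnS => nm.
apply: (le_trans (IH nm)); apply: rho_step.
exact: leq_trans n1 nm.
Qed.
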